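(* For all positive real numbers $a\neq b$ and all $t\in(0,1)$, \[ a^{1-t}b^t\le \frac{1}{e}\big((1-t)a+tb\big)^{\frac{(1-2t)(tb+(1-t)a)}{t(1-t)(b-a)}}\left(\frac{b^{\frac{tb}{1-t}}}{a^{\frac{(1-t)a}{t}}}\right)^{\frac{1}{b-a}}\le (1-t)a+tb. \] *)

(* Defs.v *)
From Stdlib Require Export Reals.

(* Main.v *)
Require Import Defs.
From Coquelicot Require Import Coquelicot.
From Stdlib Require Import Reals Lra.
Open Scope R_scope.

Lemma ln_le_sub1 z : 0 < z -> ln z <= z - 1.
Proof. intros hz. pose proof (exp_ineq1_le (ln z)). rewrite exp_ln in H; lra. Qed.

Lemma ln_ge_1sub z : 0 < z -> 1 - / z <= ln z.
Proof. intros hz. pose proof (ln_le_sub1 (/ z) (Rinv_0_lt_compat _ hz)).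
  rewrite ln_Rinv in H; lra. Qed.

Lemma expleq x y : x <= y -> exp x <= exp y.
Proof. intros [h|h]; [left; apply exp_increasing; exact h | subst; lra]. Qed.

Lemma ln_concave p x y : 0 <= p <= 1 -> 0 < x -> 0 < y ->
  p * ln x + (1 - p) * ln y <= ln (p * x + (1 - p) * y).
Proof.
  intros hp hx hy. set (m := p * x + (1 - p) * y).
  assert (hm : 0 < m) by (unfold m; nra).
  pose proof (ln_le_sub1 (x / m) ltac:(apply Rdiv_lt_0_compat; lra)).
  pose proof (ln_le_sub1 (y / m) ltac:(apply Rdiv_lt_0_compat; lra)).
  rewrite ln_div in H by lra. rewrite ln_div in H0 by lra.
  assert (p * (x / m - 1) + (1 - p) * (y / m - 1) = 0) by (unfold m in *; field; lra).
  nra.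
Qed.

Lemma sign_mvt (f df : R -> R) u : 0 < u ->
  (forall x, 0 < x -> is_derive f x (df x)) ->
  (forall x, 0 < x -> 0 <= df x) -> f 1 = 0 ->
  0 <= (u - 1) * f u.
Proof.
  intros hu hd hdf h1.
  destruct (MVT_gen f 1 u df) as [c [hc e]].
  - intros x hx. apply hd. pose proof (Rmin_glb_lt 1 u 0 ltac:(lra) hu). lra.
  - intros x hx. pose proof (Rmin_glb_lt 1 u 0 ltac:(lra) hu).
    apply continuity_pt_filterlim. apply (ex_derive_continuous (K:=R_AbsRing) (V:=R_NormedModule) f x).
    eexists. apply hd. lra.
  - pose proof (Rmin_glb_lt 1 u 0 ltac:(lra) hu).
    assert (0 <= df c) by (apply hdf; lra).
    rewrite h1 in e. assert (E : f u = df c * (u - 1)) by lra. rewrite E.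
    replace ((u - 1) * (df c * (u - 1))) with (df c * ((u-1)*(u-1))) by ring.
    apply Rmult_le_pos; [lra| apply Rle_0_sqr].
Qed.

Lemma g_sign u : 0 < u -> 0 <= (u - 1) * ((u + 1) * ln u - 2 * (u - 1)).
Proof.
  intros hu.
  apply (sign_mvt (fun u => (u + 1) * ln u - 2 * (u - 1)) (fun u => ln u + 1 / u - 1)); auto.
  - intros x hx. auto_derive. lra. field. lra.
  - intros x hx. pose proof (ln_ge_1sub x hx). unfold Rdiv. lra.
  - rewrite ln_1. ring.
Qed.

Lemma h_sign u : 0 < u -> 0 <= (u - 1) * ((u - 1) * ln ((1 + u) / 2) - u * ln u + u - 1).
Proof.
  intros hu.
  apply (sign_mvt (fun u => (u - 1) * ln ((1 + u) / 2) - u * ln u + u - 1)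
     (fun u => ln ((1 + u) / 2) + (u - 1) / (1 + u) - ln u)); auto.
  - intros x hx. auto_derive. lra. unfold Rdiv. field. lra.
  - intros x hx. pose proof (ln_ge_1sub ((1 + x) / (2 * x)) ltac:(apply Rdiv_lt_0_compat; lra)).
    rewrite ln_div in H by lra. rewrite ln_mult in H by lra.
    rewrite ln_div by lra.
    assert (1 - / ((1 + x) / (2 * x)) = (x - 1) / (1 + x) * -1) by (field; lra).
    rewrite H0 in H. lra.
  - replace ((1+1)/2) with 1 by field. rewrite ln_1. ring.
Qed.

Lemma keyI x y : 0 < x -> 0 < y -> x <> y ->
  (ln x + ln y) / 2 <= (y * ln y - x * ln x) / (y - x) - 1 /\
  (y * ln y - x * ln x) / (y - x) - 1 <= ln ((x + y) / 2).
Proof.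
  intros hx hy hxy.
  set (u := y / x).
  assert (hu : 0 < u) by (unfold u; apply Rdiv_lt_0_compat; lra).
  assert (hu1 : u - 1 <> 0) by (unfold u; intro E; apply hxy;
     assert (y = x * (u)) by (unfold u; field; lra); unfold u in *; nra).
  assert (ey : y = x * u) by (unfold u; field; lra).
  assert (ly : ln y = ln x + ln u) by (rewrite ey; apply ln_mult; lra).
  assert (lm : ln ((x + y) / 2) = ln x + ln ((1 + u) / 2)).
  { rewrite <- ln_mult by (try apply Rdiv_lt_0_compat; lra). f_equal. rewrite ey. field. }
  assert (eS : (y * ln y - x * ln x) / (y - x) - 1 = ln x + (u * ln u / (u - 1) - 1)).
  { rewrite ly, ey. field. split; auto. intro; apply hu1; nra. }
  rewrite eS, ly, lm.
  pose proof (g_sign u hu). pose proof (h_sign u hu).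
  assert (hD : 0 < / ((u - 1) * (u - 1))) by (apply Rinv_0_lt_compat; nra).
  split.
  - assert (u * ln u / (u - 1) - 1 - ln u / 2 =
       ((u - 1) * ((u + 1) * ln u - 2 * (u - 1))) * / ((u - 1) * (u - 1)) / 2) by (field; auto).
    assert (0 <= ((u - 1) * ((u + 1) * ln u - 2 * (u - 1))) * / ((u - 1) * (u - 1)))
      by (apply Rmult_le_pos; lra).
    lra.
  - assert (ln ((1 + u) / 2) - (u * ln u / (u - 1) - 1) =
       ((u - 1) * ((u - 1) * ln ((1 + u) / 2) - u * ln u + u - 1)) * / ((u - 1) * (u - 1))) by (field; auto).
    assert (0 <= ((u - 1) * ((u - 1) * ln ((1 + u) / 2) - u * ln u + u - 1)) * / ((u - 1) * (u - 1)))
      by (apply Rmult_le_pos; lra).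
    lra.
Qed.

Theorem theorem3p1 (a b t : R) (ha : 0 < a) (hb : 0 < b) (hab : a <> b)
  (ht0 : 0 < t) (ht1 : t < 1) :
  let A := (1 - t) * a + t * b in
  let M := / exp 1
           * Rpower A ((1 - 2 * t) * (t * b + (1 - t) * a) / (t * (1 - t) * (b - a)))
           * Rpower (Rpower b (t * b / (1 - t)) / Rpower a ((1 - t) * a / t)) (1 / (b - a)) in
  Rpower a (1 - t) * Rpower b t <= M /\ M <= A.
Proof.
  intros A M.
  assert (hA : 0 < A) by (unfold A; nra).
  assert (hba : b - a <> 0) by lra.
  assert (hAa : A <> a) by (unfold A; intro E; apply hba; nra).
  assert (hAb : A <> b) by (unfold A; intro E; apply hba; nra).
  set (la := ln a) in *. set (lb := ln b) in *. set (lA := ln A) in *.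
  set (K := -1 + (1 - 2 * t) * (t * b + (1 - t) * a) / (t * (1 - t) * (b - a)) * lA
            + 1 / (b - a) * (t * b / (1 - t) * lb - (1 - t) * a / t * la)).
  assert (eM : M = exp K).
  { unfold M, K, Rpower. rewrite ln_div by apply exp_pos. rewrite !ln_exp.
    rewrite <- exp_Ropp, <- !exp_plus. f_equal; unfold lA, la, lb; ring. }
  assert (eK : K = (1 - t) * ((A * lA - a * la) / (A - a) - 1)
                   + t * ((b * lb - A * lA) / (b - A) - 1)).
  { unfold K, A. field. fold A. repeat split; lra. }
  destruct (keyI a A ha hA (not_eq_sym hAa)) as [l1 u1].
  destruct (keyI A b hA hb hAb) as [l2 u2].
  fold la lA lb in l1, u1, l2, u2.
  assert (cc1 : (1 - t) * la + (1 - (1 - t)) * lb <= lA).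
  { pose proof (ln_concave (1 - t) a b ltac:(lra) ha hb) as H.
    replace (1 - (1 - t)) with t in * by ring. exact H. }
  assert (cc2 : (1 - t) * ln ((a + A) / 2) + (1 - (1 - t)) * ln ((A + b) / 2) <= lA).
  { unfold lA. replace A with ((1 - t) * ((a + A) / 2) + (1 - (1 - t)) * ((A + b) / 2)) at 3
      by (unfold A; field).
    apply ln_concave; unfold A; nra. }
  split.
  - rewrite eM. unfold Rpower. rewrite <- exp_plus. apply expleq. fold la lb. nra.
  - rewrite eM. rewrite <- (exp_ln A hA). apply expleq. fold lA. nra.
Qed.
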